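(* Let $q$ be a power of an odd prime, $c\in\mathbb{F}_q^*$, $b\in\mathbb{F}_q$ a nonsquare, $\beta\in\mathbb{F}_{q^2}$ with $\beta^2=b$, and $f(X)=c(X^{q+1}+X^2)$ on $\mathbb{F}_{q^2}$. If $\alpha\in\beta\mathbb{F}_q=\{y\beta: y\in\mathbb{F}_q\}$, then the number of $\gamma\in\mathbb{F}_{q^2}$ with $f(\gamma)=\alpha$ is $q$ if $\alpha=0$ and $0$ if $\alpha\neq0$. *)

(* Defs.v *)
From mathcomp Require Import all_boot all_algebra all_field.
Set Implicit Arguments. Unset Strict Implicit. Unset Printing Implicit Defensive.
Import GRing.Theory.
Local Open Scope ring_scope.

(* Elements of the subfield F_q of a finite field L with #|L| = q^2:
   the fixed points of the q-power Frobenius. *)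
Definition inFq (L : finFieldType) (q : nat) (x : L) : bool := x ^+ q == x.

Definition fpoly (L : finFieldType) (q : nat) (c x : L) : L :=
  c * (x ^+ q.+1 + x ^+ 2).

(* Main.v *)
Require Import Defs.
From mathcomp Require Import all_boot all_algebra all_field.
From mathcomp Require Import ring.
Import GRing.Theory.
Local Open Scope ring_scope.

Lemma card_roots_lt {F : finFieldType} (P : {poly F}) :
  P != 0 -> (#|[set x | root P x]| < size P)%N.
Proof.
move=> P0; rewrite cardE; apply: max_poly_roots => //.
  by apply/allP => x; rewrite mem_enum inE.
exact: enum_uniq.
Qed.

Lemma size_Xn_addX (F : finFieldType) (q : nat) (s : F) : (1 < q)%N ->
  size ('X^q + s *: 'X : {poly F}) = q.+1.
Proof.
move=> hq; rewrite size_polyDl ?size_polyXn //.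
by rewrite (leq_ltn_trans (size_scale_leq _ _)) // size_polyX ltnS.
Qed.

Lemma card_Xn_addX (F : finFieldType) (q : nat) (s : F) : (1 < q)%N ->
  leq #|[set x : F | x ^+ q + s * x == 0]| q.
Proof.
move=> hq.
have P0 : ('X^q + s *: 'X : {poly F}) != 0.
  by rewrite -size_poly_eq0 size_Xn_addX.
have := card_roots_lt _ P0; rewrite size_Xn_addX // ltnS; apply: leq_trans.
apply: subset_leq_card; apply/subsetP => x; rewrite !inE /root.
by rewrite !hornerE.
Qed.

Theorem theorem15 (p k : nat) (L : finFieldType)
  (hp : prime p) (hodd : odd p) (hk : (0 < k)%N)
  (hL : #|L| = ((p ^ k) ^ 2)%N)
  (c b beta alpha : L)
  (hc : inFq (p ^ k) c) (hc0 : c != 0)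
  (hb : inFq (p ^ k) b)
  (hbns : ~ exists y : L, inFq (p ^ k) y /\ y ^+ 2 = b)
  (hbeta : beta ^+ 2 = b)
  (halpha : exists y : L, inFq (p ^ k) y /\ alpha = y * beta) :
  #|[set g : L | fpoly (p ^ k) c g == alpha]| =
    (if alpha == 0 then (p ^ k)%N else 0%N).
Proof.
set q := (p ^ k)%N.
have hq1 : (1 < q)%N.
  rewrite /q; have := prime_gt1 hp; move: hk; clear.
  by case: k => // k' _ h; rewrite expnS (leq_trans h) // leq_pmulr // expn_gt0 (ltnW h).
have hchar : p \in [pchar L].
  by apply: (card_finPcharP (n := (k * 2)%N)) => //; rewrite hL expnM.
have hnat : ([pchar L]).-nat q.
  rewrite /q pnatX; apply/orP; left.
  by rewrite (eq_pnat _ (pcharf_eq hchar)); exact: pnat_id.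
have frD x y : (x + y) ^+ q = x ^+ q + y ^+ q :> L by exact: exprDn_pchar.
have frN x : (- x) ^+ q = - x ^+ q :> L by exact: exprNn_pchar.
have frq x : (x ^+ q) ^+ q = x :> L by rewrite -exprM mulnn -hL expf_card.
have betaq : beta ^+ q = - beta.
  have h : (beta ^+ q) ^+ 2 = beta ^+ 2.
    by rewrite -exprM mulnC exprM hbeta; exact/eqP.
  have : (beta ^+ q - beta) * (beta ^+ q + beta) == 0.
    by rewrite -subr_sqr h subrr.
  rewrite mulf_eq0 => /orP [|]; last by rewrite addr_eq0 => /eqP.
  by rewrite subr_eq0 => hq; exfalso; apply: hbns; exists beta.
have alphaq : alpha ^+ q = - alpha.
  by case: halpha => y [hy ->]; rewrite exprMn (eqP hy) betaq mulrN.
have key g : (fpoly q c g == alpha) = (alpha == 0) && (g ^+ q + 1 * g == 0).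
  rewrite mul1r; set t := g ^+ q + g.
  have tq : t ^+ q = t by rewrite /t frD frq addrC.
  have ft : fpoly q c g = c * g * t.
    by rewrite /fpoly /t exprS expr2 -mulrDr mulrA.
  case t0: (t == 0).
    by rewrite ft (eqP t0) mulr0 eq_sym andbT.
  rewrite andbF; apply/negP => /eqP hf.
  have : (fpoly q c g) ^+ q = - fpoly q c g by rewrite hf alphaq.
  rewrite ft !exprMn (eqP hc) tq => h.
  have : c * t * t == 0.
    have -> : c * t * t = c * g ^+ q * t + c * g * t by rewrite /t; ring.
    by rewrite h addNr.
  by rewrite !mulf_eq0 (negbTE hc0) t0.
have -> : [set g : L | fpoly q c g == alpha] =
  if alpha == 0 then [set g : L | g ^+ q + 1 * g == 0] else set0.
  by apply/setP => g; rewrite inE key; case: (alpha == 0); rewrite /= ?inE.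
case: eqP => _; last by rewrite cards0.
apply/eqP; rewrite eqn_leq card_Xn_addX //=.
set T := fun g : L => g ^+ q + 1 * g.
set K := [set g : L | T g == 0].
set S := [set x : L | x ^+ q + (-1) * x == 0].
have hS : (#|S| <= q)%N by exact: card_Xn_addX.
have fib t : (#|[set g | T g == t]| <= #|K|)%N.
  case: (pickP [pred g | T g == t]) => [g0 hg0 | none]; last first.
    have -> : [set g | T g == t] = set0.
      by apply/setP => g; rewrite !inE; exact: none.
    by rewrite cards0.
  apply: leq_trans (leq_imset_card (fun x => x + g0) K).
  apply/subset_leq_card/subsetP => h; rewrite inE => /eqP hh.
  apply/imsetP; exists (h - g0); last by rewrite subrK.
  rewrite inE; move: hg0 hh; rewrite /= /T frD frN => /eqP h1 h2.
  apply/eqP; rewrite -[RHS](subrr t); rewrite -{1}h2 -h1; ring.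
have : (#|L| <= q * #|K|)%N.
  rewrite -[#|L|]sum1_card (partition_big T (mem S)) /=; last first.
    move=> g _; rewrite inE /T !mul1r frD frq; apply/eqP; ring.
  apply: (@leq_trans (\sum_(t in S) #|K|)); last first.
    rewrite sum_nat_const.
    by rewrite leq_mul2r hS orbT.
  apply: leq_sum => t _; apply: leq_trans (fib t).
  by rewrite -sum1dep_card.
by rewrite hL (expnS q 1) expn1 leq_pmul2l // ltnW.
Qed.
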